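(* Let $n\geq 2$ be an integer and let $A$ be a real square matrix of order $n$ of the form $$A=\begin{pmatrix}1& -a_{12}&\cdots&-a_{1,n-1}&-a_{1n}\\ 0&1& \cdots&-a_{2,n-1}&-a_{2n}\\ \vdots&\vdots&\ddots&\vdots&\vdots\\ 0&0&\cdots&1&-a_{n-1,n}\\ a_1&a_2&\cdots&a_{n-1}&a_n\end{pmatrix},$$ i.e. the first $n-1$ rows form an upper unitriangular block whose entries strictly above the diagonal are $-a_{ij}$ ($1\le i<j\le n$), and the last row is $(a_1,\dots,a_n)$, where $a_{ij}\geq 0$ for all $1\leq i<j\leq n$, $a_i\geq 0$ for all $i=1,\ldots,n-1$, and $a_n>0$. Then $\det(A)>0$. *)

(* Defs.v *)
From mathcomp Require Import all_boot all_order all_algebra.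
From mathcomp Require Import reals.
Set Implicit Arguments. Unset Strict Implicit. Unset Printing Implicit Defensive.
Import Order.TTheory GRing.Theory Num.Theory.
Local Open Scope ring_scope.

(* Indices are 0-based: paper index i corresponds to 'I_n element of value i-1.
   Row n-1 (0-based, i.e. paper row n) is the last row (a_1,...,a_n);
   rows 0..n-2 form the upper unitriangular block with entries -a_{ij}
   strictly above the diagonal and 0 below. *)
Definition lemma_mx (R : pzRingType) (n : nat) (aa : 'I_n -> 'I_n -> R)
  (a : 'I_n -> R) : 'M[R]_n :=
  \matrix_(i < n, j < n)
    if (i : nat) == n.-1 then a j
    else if i == j then 1
    else if (i < j)%N then - aa i j
    else 0.

(* Main.v *)
Require Import Defs.
From mathcomp Require Import all_boot all_order all_algebra.
From mathcomp Require Import reals.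
Import Order.TTheory GRing.Theory Num.Theory.
Local Open Scope ring_scope.

Lemma mulE (R : comPzRingType) n (M : 'M[R]_(n.+2)) (c : 'I_n.+2 -> R) i j :
  (M *m \matrix_(k, l) (if k == l then 1 else if k == ord0 then c l else 0)) i j
  = M i j + (if j == ord0 then 0 else M i ord0 * c j).
Proof.
rewrite mxE (bigD1 j) //= mxE eqxx mulr1; congr (_ + _).
case: eqP => [->|/eqP nj].
  by rewrite big1 // => k /negbTE nk; rewrite mxE nk mulr0.
rewrite (bigD1 ord0) 1?eq_sym //= mxE eq_sym (negbTE nj) eqxx big1 ?addr0 // => k /andP[kj k0].
by rewrite mxE (negbTE kj) (negbTE k0) mulr0.
Qed.

Lemma step (R : comPzRingType) n (aa : 'I_n.+2 -> 'I_n.+2 -> R) a :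
  \det (lemma_mx aa a) = \det (lemma_mx (fun i j => aa (lift ord0 i) (lift ord0 j))
     (fun j => a (lift ord0 j) + a ord0 * aa ord0 (lift ord0 j))).
Proof.
set E := \matrix_(k, l) (if k == l then 1 else if k == ord0 then aa ord0 l else 0) : 'M[R]_n.+2.
have dE : \det E = 1.
  rewrite -det_tr det_trig; last first.
    apply/is_trig_mxP => i j lt; rewrite !mxE.
    have -> : (j == i) = false by apply/negbTE; rewrite neq_ltn lt orbT.
    by case: eqP => // j0; rewrite j0 in lt.
  by rewrite big1 // => i _; rewrite !mxE eqxx.
rewrite -[\det (lemma_mx aa a)]mulr1 -dE -det_mulmx (expand_det_row _ ord0) big_ord_recl.
rewrite big1 ?addr0; last first.
  move=> j _; rewrite mulE !mxE /=.
  by rewrite mul1r addNr mul0r.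
rewrite mulE !mxE /= addr0 mul1r /cofactor expr0 mul1r; congr (\det _).
apply/matrixP => i j; rewrite 2!mxE mulE !mxE /=.
rewrite /bump /= !add1n eqSS ltnS (inj_eq (@lift_inj _ ord0)).
case: (_ == n)%N => /=; first by [].
by rewrite mul0r addr0.
Qed.


Lemma pos (R : realType) n : forall (aa : 'I_n.+1 -> 'I_n.+1 -> R) (a : 'I_n.+1 -> R),
  (forall i j : 'I_n.+1, (i < j)%N -> 0 <= aa i j) ->
  (forall i : 'I_n.+1, (i < n)%N -> 0 <= a i) ->
  (forall i : 'I_n.+1, (i : nat) = n -> 0 < a i) ->
  0 < \det (lemma_mx aa a).
Proof.
elim: n => [|n IH] aa a haa ha han.
  rewrite (expand_det_row _ ord0) big_ord1 /cofactor det_mx00 !mxE /=.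
  rewrite ?mulr1 ?mul1r.
by apply: han.
rewrite step; apply: IH.
- by move=> i j ij; apply: haa; rewrite /= /bump /= !add1n ltnS.
- move=> i ilt; apply: addr_ge0; first by apply: ha; rewrite /= /bump /= add1n ltnS.
  by apply: mulr_ge0; [apply: ha | apply: haa].
- move=> i ein; apply: ltr_wpDr; last by apply: han; rewrite /= /bump /= add1n ein.
  by apply: mulr_ge0; [apply: ha | apply: haa].
Qed.

Theorem lemma2p5 (R : realType) (n : nat) (hn : (2 <= n)%N)
  (aa : 'I_n -> 'I_n -> R) (a : 'I_n -> R)
  (haa : forall i j : 'I_n, (i < j)%N -> 0 <= aa i j)
  (ha : forall i : 'I_n, (i < n.-1)%N -> 0 <= a i)
  (han : forall i : 'I_n, (i : nat) = n.-1 -> 0 < a i) :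
  0 < \det (lemma_mx aa a).
Proof.
case: n hn aa a haa ha han => [|n] // _ aa a haa ha han.
exact: pos.
Qed.
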